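(* Assume the setting and standing assumptions (A1), (A2) described in the context. If $\Psi^-$ is initially positive and $\Psi^+$ has a negative sign change, then the system exhibits microphase separation for every $\Delta\in\mathcal{D}$ (robust microphase separation).
   Context: Let $n,m\ge 1$, $B\in\mathbb{Z}^{n\times m}$, $C\in\mathbb{Z}^{m\times n}$. Given bounds $0\le \Delta_j^-\le \Delta_j^+<\infty$ ($j=1,\dots,m$), let $\mathcal{D}$ be the set of diagonal matrices $\Delta=\mathrm{diag}(\Delta_1,\dots,\Delta_m)$ with $\Delta_j^-\le\Delta_j\le\Delta_j^+$ for all $j$. Let $J_2,J_4\in\mathbb{R}^{n\times n}$ be symmetric. Standing assumptions: (A1) for every $\Delta\in\mathcal{D}$, the matrix $B\Delta C$ is singular and has $n-1$ eigenvalues (counted with multiplicity) with negative real part (so $0$ is a simple eigenvalue), and there is a nonzero vector $v\ge 0$ with $v^\top B=0$; (A2) $J_2$ is indefinite, $J_4$ is negative semidefinite, and there exists $\bar\kappa$ such that $\bar\kappa^2 J_2+\bar\kappa^4 J_4$ is negative definite. For real $\kappa\ge 0$ and $\Delta\in\mathcal{D}$ set $J(\Delta,\kappa)=B\Delta C+\kappa^2 J_2+\kappa^4 J_4$ and let $\rho(\Delta,\kappa)$ be its spectral abscissa (the maximum real part of its eigenvalues). Define $\Psi^-(\kappa)=\min_{\Delta\in\mathcal{D}}\det[-J(\Delta,\kappa)]$ and $\Psi^+(\kappa)=\max_{\Delta\in\mathcal{D}}\det[-J(\Delta,\kappa)]$. A continuous function $f$ on $[0,\infty)$ is initially positive if there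 is $\hat\kappa>0$ with $f>0$ on $(0,\hat\kappa)$; it has a negative sign change if $f(\kappa_1)>0>f(\kappa_2)$ for some $\kappa_1<\kappa_2$. For a given $\Delta\in\mathcal{D}$, the system exhibits microphase separation (MS) if there exists $\hat\kappa>0$ with $\rho(\Delta,\kappa)<0$ for all $\kappa\in(0,\hat\kappa)$, and there exist $\hat\kappa<\kappa_1<\kappa_2$ with $\rho(\Delta,\kappa_1)>0$ and $\rho(\Delta,\kappa_2)<0$. *)

(* Defs.v *)
From HB Require Import structures.
From mathcomp Require Import all_boot all_order all_algebra.
From mathcomp Require Import classical_sets boolp reals.
From mathcomp Require Import complex.
Set Implicit Arguments. Unset Strict Implicit. Unset Printing Implicit Defensive.
Import Order.TTheory GRing.Theory Num.Theory.
Local Open Scope ring_scope.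
Local Open Scope classical_set_scope.

Section Defs.
Variable R : realType.

Definition eigenvalue (n : nat) (A : 'M[R]_n) (z : complex R) : Prop :=
  root (map_poly (fun x : R => (x%:C)%C) (char_poly A)) z.

Definition eigen_mset (n : nat) (A : 'M[R]_n) (s : seq (complex R)) : Prop :=
  map_poly (fun x : R => (x%:C)%C) (char_poly A) = \prod_(z <- s) ('X - z%:P).

(* spectral abscissa: the maximum real part of the eigenvalues
   (the set is finite and nonempty for n >= 1, so sup = max) *)
Definition spectral_abscissa (n : nat) (A : 'M[R]_n) : R :=
  sup [set complex.Re z | z in [set z | eigenvalue A z]].

Definition quad (n : nat) (M : 'M[R]_n) (x : 'cV[R]_n) : R := (x^T *m M *m x) ord0 ord0.

Definition symmetric_mx (n : nat) (M : 'M[R]_n) : Prop := M^T = M.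
Definition neg_semidef (n : nat) (M : 'M[R]_n) : Prop := forall x, quad M x <= 0.
Definition neg_def (n : nat) (M : 'M[R]_n) : Prop := forall x, x != 0 -> quad M x < 0.
Definition indefinite (n : nat) (M : 'M[R]_n) : Prop :=
  (exists x, quad M x > 0) /\ (exists y, quad M y < 0).

(* the box D of admissible diagonal matrices, described by their diagonal *)
Definition in_box (m : nat) (dl du d : 'rV[R]_m) : Prop :=
  forall j, dl ord0 j <= d ord0 j <= du ord0 j.

Definition intmx (p q : nat) (M : 'M[int]_(p, q)) : 'M[R]_(p, q) :=
  map_mx (fun z : int => z%:~R) M.

Definition Jmat (n m : nat) (B : 'M[int]_(n, m)) (C : 'M[int]_(m, n))
  (J2 J4 : 'M[R]_n) (d : 'rV[R]_m) (k : R) : 'M[R]_n :=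
  intmx B *m diag_mx d *m intmx C + (k ^+ 2) *: J2 + (k ^+ 4) *: J4.

Definition Psi_minus (n m : nat) (B : 'M[int]_(n, m)) (C : 'M[int]_(m, n))
  (J2 J4 : 'M[R]_n) (dl du : 'rV[R]_m) (k : R) : R :=
  inf [set \det (- Jmat B C J2 J4 d k) | d in [set d | in_box dl du d]].

Definition Psi_plus (n m : nat) (B : 'M[int]_(n, m)) (C : 'M[int]_(m, n))
  (J2 J4 : 'M[R]_n) (dl du : 'rV[R]_m) (k : R) : R :=
  sup [set \det (- Jmat B C J2 J4 d k) | d in [set d | in_box dl du d]].

Definition initially_positive (f : R -> R) : Prop :=
  exists kh, 0 < kh /\ forall k, 0 < k < kh -> f k > 0.

Definition negative_sign_change (f : R -> R) : Prop :=
  exists k1 k2, 0 <= k1 /\ k1 < k2 /\ f k1 > 0 /\ f k2 < 0.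

Definition microphase_separation (rho : R -> R) : Prop :=
  exists kh, 0 < kh /\ (forall k, 0 < k < kh -> rho k < 0) /\
    exists k1 k2, kh < k1 /\ k1 < k2 /\ rho k1 > 0 /\ rho k2 < 0.

End Defs.

(* Main.v *)
Require Import Defs.
From HB Require Import structures.
From mathcomp Require Import all_boot all_order all_algebra.
From mathcomp Require Import classical_sets boolp reals.
From mathcomp Require Import complex.
From mathcomp Require Import polyrcf.
From mathcomp Require Import ring lra.
Import Order.TTheory GRing.Theory Num.Theory.
Local Open Scope ring_scope.


Module Aux.
Set Implicit Arguments. Unset Strict Implicit.
Section Aux.
Variable R : realType.
Local Notation C := (complex R).
Local Notation RC := (real_complex R).
Local Notation PC X := (map_poly RC (char_poly X)).

Lemma eigE n (X : 'M[R]_n) z : Defs.eigenvalue X z <-> root (PC X) z.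
Proof. by []. Qed.

Lemma PC_monic n (X : 'M[R]_n) : PC X \is monic.
Proof. by rewrite map_monic char_poly_monic. Qed.

Lemma charC_fact n (X : 'M[R]_n) : exists r : seq C, size r = n /\
  PC X = \prod_(z <- r) ('X - z%:P).
Proof.
have [r Hr] := closed_field_poly_normal (PC X).
rewrite (monicP (PC_monic X)) scale1r in Hr.
exists r; split => //.
have := size_prod_XsubC r id.
rewrite -Hr.
rewrite size_map_poly size_char_poly.
by case.
Qed.

Lemma seq_Re_bound (r : seq C) : exists b, forall z, z \in r -> complex.Re z <= b.
Proof.
elim: r => [|a r [b Hb]]; first by exists 0.
exists (Num.max (complex.Re a) b) => z; rewrite inE => /orP[/eqP ->|/Hb h].
  by rewrite le_max lexx.
by rewrite le_max h orbT.
Qed.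

Lemma seq_Re_neg (r : seq C) : (forall z, z \in r -> complex.Re z < 0) ->
  exists2 b, b < 0 & forall z, z \in r -> complex.Re z <= b.
Proof.
elim: r => [|a r IH] H; first by exists (-1) => //; rewrite ltrN10.
have [b b0 Hb] : exists2 b, b < 0 & forall z, z \in r -> complex.Re z <= b.
  by apply: IH => z zr; apply: H; rewrite inE zr orbT.
exists (Num.max (complex.Re a) b).
  by rewrite gt_max b0 andbT H // inE eqxx.
move=> z; rewrite inE => /orP[/eqP ->|/Hb h].
  by rewrite le_max lexx.
by rewrite le_max h orbT.
Qed.

Lemma rho_lt0 n (X : 'M[R]_n) : (0 < n)%N ->
  (forall z, root (PC X) z -> complex.Re z < 0) -> spectral_abscissa X < 0.
Proof.
move=> n0 H; have [r [sr Hr]] := charC_fact X.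
have rE z : root (PC X) z = (z \in r) by rewrite Hr root_prod_XsubC.
have [b b0 Hb] : exists2 b, b < 0 & forall z, z \in r -> complex.Re z <= b.
  by apply: seq_Re_neg => z zr; apply: H; rewrite rE.
apply: le_lt_trans b0; apply: ge_sup.
  case: r sr Hr rE Hb => [|a r] /= sr; first by rewrite -sr in n0.
  move=> _ rE _; exists (complex.Re a); exists a => //.
  by rewrite /= eigE rE inE eqxx.
by move=> _ [z /= /eigE zr <-]; apply: Hb; rewrite -rE.
Qed.

Lemma rho_gt0 n (X : 'M[R]_n) z : root (PC X) z -> 0 < complex.Re z ->
  0 < spectral_abscissa X.
Proof.
move=> rz z0; have [r [sr Hr]] := charC_fact X.
have rE w : root (PC X) w = (w \in r) by rewrite Hr root_prod_XsubC.
have [b Hb] := seq_Re_bound r.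
apply: (lt_le_trans z0); apply: sup_upper_bound; last by exists z.
split; first by exists (complex.Re z); exists z.
by exists b => _ [w /= /eigE wr <-]; apply: Hb; rewrite -rE.
Qed.

End Aux.
End Aux.

Module Aux2.
Import Aux.
Set Implicit Arguments. Unset Strict Implicit.
Section Aux2.
Variable R : realType.
Local Notation C := (complex R).
Local Notation RC := (real_complex R).
Local Notation PC X := (map_poly RC (char_poly X)).

Lemma char0 n (X : 'M[R]_n) : (char_poly X).[0] = \det (- X).
Proof.
by rewrite horner_coef0 char_poly_det -scaleN1r detZ.
Qed.

Lemma monic_pos_root (p : {poly R}) : p \is monic -> p.[0] < 0 ->
  exists2 t, 0 < t & root p t.
Proof.
move=> mp p0.
have lc0 : 0 < lead_coef p by rewrite (monicP mp) ltr01.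
have [N HN] := poly_pinfty_gt_lc lc0.
have T0 : 0 <= Num.max N 0 by rewrite le_max lexx orbT.
have sg : p.[0] * p.[Num.max N 0] < 0.
  by rewrite pmulr_llt0 // (lt_le_trans ltr01) // -(monicP mp) HN // le_max lexx.
have [t ht rt] := poly_ivtoo T0 sg.
by exists t => //; move: ht; rewrite in_itv /= => /andP[].
Qed.

Lemma rho_gt0_det n (X : 'M[R]_n) : \det (- X) < 0 -> 0 < spectral_abscissa X.
Proof.
move=> d0; rewrite -char0 in d0.
have [t t0 rt] := monic_pos_root (char_poly_monic X) d0.
apply: (@rho_gt0 _ _ _ (t%:C)%C) => //.
by rewrite /root horner_map (rootP rt) rmorph0.
Qed.

End Aux2.
End Aux2.

Module Aux3.
Import Aux Aux2.
Set Implicit Arguments. Unset Strict Implicit.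
Section Aux3.
Variable R : realType.
Local Notation C := (complex R).
Local Notation RC := (real_complex R).
Local Notation PC X := (map_poly RC (char_poly X)).

Lemma quadE n (M : 'M[R]_n) x :
  quad M x = \sum_j (\sum_i x i ord0 * M i j) * x j ord0.
Proof.
rewrite /quad !mxE; apply: eq_bigr => j _; rewrite !mxE; congr (_ * _).
by apply: eq_bigr => i _; rewrite !mxE.
Qed.

Lemma ReD (x y : C) : complex.Re (x + y) = complex.Re x + complex.Re y.
Proof. by case: x; case: y. Qed.

Lemma Re0 : complex.Re (0 : C) = 0. Proof. by []. Qed.

Lemma Re_sum I (r : seq I) (P : pred I) (F : I -> C) :
  complex.Re (\sum_(i <- r | P i) F i) = \sum_(i <- r | P i) complex.Re (F i).
Proof. exact: (big_morph _ ReD Re0). Qed.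

Lemma quad0 n (M : 'M[R]_n) : quad M 0 = 0.
Proof. by rewrite /quad mulmx0 mxE. Qed.

Lemma sq2_pos (a b : R) : (a != 0) || (b != 0) -> 0 < a ^+ 2 + b ^+ 2.
Proof.
have sp (c : R) : c != 0 -> 0 < c ^+ 2 by move=> c0; rewrite exprn_even_gt0 //= c0.
case/orP => h; have := sp _ h.
  by have := sqr_ge0 b; lra.
by have := sqr_ge0 a; lra.
Qed.

Lemma eig_negdef n (X : 'M[R]_n) :
  (forall x, x != 0 -> quad X x < 0) ->
  forall z, root (PC X) z -> complex.Re z < 0.
Proof.
move=> H z rz.
have : eigenvalue (map_mx RC X) z by rewrite eigenvalue_root_char -map_char_poly.
case/eigenvalueP => v Hv v0.
pose a := \col_i complex.Re (v ord0 i).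
pose b := \col_i complex.Im (v ord0 i).
have key : quad X a + quad X b =
   complex.Re z * \sum_i (complex.Re (v ord0 i) ^+ 2 + complex.Im (v ord0 i) ^+ 2).
  have E1 : \sum_j (v *m map_mx RC X) ord0 j * conjc (v ord0 j) =
            \sum_j (z *: v) ord0 j * conjc (v ord0 j) by rewrite Hv.
  have L : quad X a + quad X b =
      complex.Re (\sum_j (v *m map_mx RC X) ord0 j * conjc (v ord0 j)).
    rewrite Re_sum quadE quadE -big_split /=.
    apply: eq_bigr => j _; rewrite !mxE mulr_suml Re_sum mulr_suml mulr_suml -big_split /=.
    apply: eq_bigr => i _; rewrite !mxE.
    case: (v ord0 i) => [ai bi]; case: (v ord0 j) => [aj bj] /=.
    rewrite /=; ring.
  rewrite L E1 Re_sum mulr_sumr; apply: eq_bigr => j _; rewrite !mxE.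
  case: (v ord0 j) => [aj bj]; clear; case: z => [za zb] /=; ring.
have [j vj] : exists j, v ord0 j != 0.
  apply/existsP; apply: contraNT v0; rewrite negb_exists => /forallP Hj.
  by apply/eqP/matrixP => i k; rewrite (ord1 i) mxE; apply/eqP; rewrite -[_ == _]negbK Hj.
have qle x : quad X x <= 0.
  by have [->|x0] := eqVneq x 0; [rewrite quad0 | exact/ltW/H].
have Spos : 0 < \sum_i (complex.Re (v ord0 i) ^+ 2 + complex.Im (v ord0 i) ^+ 2).
  rewrite (bigD1 j) //=.
  have h1 : 0 < complex.Re (v ord0 j) ^+ 2 + complex.Im (v ord0 j) ^+ 2.
    by apply: sq2_pos; move: vj; case: (v ord0 j) => aj bj; rewrite eq_complex /= negb_and.
  have h2 : 0 <= \sum_(i < n | i != j) (complex.Re (v ord0 i) ^+ 2 + complex.Im (v ord0 i) ^+ 2).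
    by rewrite sumr_ge0 // => i _; rewrite addr_ge0 ?sqr_ge0.
  lra.
have qneg : quad X a + quad X b < 0.
  move: vj; case E : (v ord0 j) => [aj bj]; rewrite eq_complex /= negb_and => /orP[] h.
    have a0 : a != 0.
      by apply/eqP => a0; move: h; have := congr1 (fun M : 'cV[R]_n => M j ord0) a0; rewrite !mxE E /= => ->; rewrite eqxx.
    by have := H _ a0; have := qle b; lra.
  have b0 : b != 0.
    by apply/eqP => b0; move: h; have := congr1 (fun M : 'cV[R]_n => M j ord0) b0; rewrite !mxE E /= => ->; rewrite eqxx.
  by have := H _ b0; have := qle a; lra.
by move: qneg; rewrite key pmulr_llt0.
Qed.


End Aux3.
End Aux3.

Module Aux4.
Set Implicit Arguments. Unset Strict Implicit.
Section Aux4.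
Variable R : realType.

Definition qf n (M : 'I_n -> 'I_n -> R) (x : 'I_n -> R) :=
  \sum_i \sum_j x i * M i j * x j.
Definition nrm n (x : 'I_n -> R) := \sum_i x i ^+ 2.

Lemma nrm_ge0 n (x : 'I_n -> R) : 0 <= nrm x.
Proof. by rewrite sumr_ge0 // => i _; rewrite sqr_ge0. Qed.

Lemma sq_sum_le n (u : 'I_n -> R) : (\sum_i u i) ^+ 2 <= 2 ^+ n * \sum_i u i ^+ 2.
Proof.
elim: n u => [|n IH] u; first by rewrite !big_ord0 expr0n /= mul1r.
rewrite !big_ord_recl; set S := \sum_(i < n) u (lift ord0 i).
set T := \sum_(i < n) u (lift ord0 i) ^+ 2.
have h := IH (fun i => u (lift ord0 i)); rewrite -/S -/T in h.
have h2 : (u ord0 + S) ^+ 2 <= 2 * u ord0 ^+ 2 + 2 * S ^+ 2.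
  have := sqr_ge0 (u ord0 - S); rewrite -subr_ge0.
  by move=> h0; rewrite -subr_ge0; apply: le_trans h0 _; rewrite le_eqVlt; apply/orP; left; apply/eqP; ring.
have p0 : 0 <= 2 ^+ n :> R by rewrite exprn_ge0.
have u0 : 0 <= u ord0 ^+ 2 by rewrite sqr_ge0.
have h3 : u ord0 ^+ 2 <= 2 ^+ n * u ord0 ^+ 2.
  by rewrite ler_peMl // exprn_ege1 // ler1n.
apply: le_trans h2 _; rewrite mulrDr !exprS -!mulrA; lra.
Qed.

Definition bv n (M : 'I_n.+1 -> 'I_n.+1 -> R) (j : 'I_n) :=
  (M ord0 (lift ord0 j) + M (lift ord0 j) ord0) / 2.
Definition Mp n (M : 'I_n.+1 -> 'I_n.+1 -> R) := fun i j : 'I_n => M (lift ord0 i) (lift ord0 j).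
Definition tl n (x : 'I_n.+1 -> R) := fun j : 'I_n => x (lift ord0 j).

Lemma qf_split n (M : 'I_n.+1 -> 'I_n.+1 -> R) x :
  qf M x = M ord0 ord0 * x ord0 ^+ 2 + 2 * x ord0 * (\sum_j bv M j * tl x j)
     + qf (Mp M) (tl x).
Proof.
rewrite /qf big_ord_recl big_ord_recl /=.
have -> : \sum_(i < n) \sum_(j < n.+1) x (lift ord0 i) * M (lift ord0 i) j * x j =
  \sum_(i < n) (x (lift ord0 i) * M (lift ord0 i) ord0 * x ord0 +
   \sum_j x (lift ord0 i) * M (lift ord0 i) (lift ord0 j) * x (lift ord0 j)).
  by apply: eq_bigr => i _; rewrite big_ord_recl.
rewrite big_split /=.
have -> : 2 * x ord0 * (\sum_j bv M j * tl x j) =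
   \sum_j x ord0 * M ord0 (lift ord0 j) * x (lift ord0 j) +
   \sum_i x (lift ord0 i) * M (lift ord0 i) ord0 * x ord0.
  rewrite mulr_sumr.
  transitivity (\sum_j (x ord0 * M ord0 (lift ord0 j) * x (lift ord0 j) +
     x (lift ord0 j) * M (lift ord0 j) ord0 * x ord0)); last by rewrite big_split.
  apply: eq_bigr => j _; rewrite /bv /tl; by field.
rewrite /Mp /tl; ring.
Qed.

Lemma qf_schur n (Mq : 'I_n -> 'I_n -> R) (b y : 'I_n -> R) (a : R) :
  qf (fun i j => Mq i j - b i * b j / a) y = qf Mq y - (\sum_i b i * y i) ^+ 2 / a.
Proof.
have E i : \sum_j y i * (Mq i j - b i * b j / a) * y j =
    \sum_j y i * Mq i j * y j - \sum_j (b i * y i) * (b j * y j) / a.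
  by rewrite -sumrB; apply: eq_bigr => j _; ring.
rewrite /qf (eq_bigr _ (fun i _ => E i)) sumrB; congr (_ - _).
rewrite expr2 mulr_suml mulr_suml; apply: eq_bigr => i _.
by rewrite mulr_sumr mulr_suml; apply: eq_bigr => j _.
Qed.

Lemma arith (a c c' D q W N X0 : R) : 0 <= c -> 0 <= W -> 0 <= N ->
  2 * c <= - a -> c * D <= c' -> q <= a * W - c' * N ->
  X0 <= 2 * W + (D - 1) * N -> q <= - c * (X0 + N).
Proof.
move=> c0 W0 N0 h1 h2 h3 h4.
have F3 := ler_wpM2l c0 h4.
have F4 := ler_wpM2r W0 h1.
have F5 := ler_wpM2r N0 h2.
lra.
Qed.

Lemma qf0 n (M : 'I_n -> 'I_n -> R) : qf M (fun _ => 0) = 0.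
Proof. by rewrite /qf big1 // => i _; rewrite big1 // => j _; rewrite !mul0r. Qed.

Lemma unif n (M : 'I_n -> 'I_n -> R) :
  (forall x, (exists i, x i != 0) -> qf M x < 0) ->
  exists2 c, 0 < c & forall x, qf M x <= - c * nrm x.
Proof.
elim: n M => [|n IH] M H.
  by exists 1 => // x; rewrite /qf /nrm !big_ord0 mulr0.
set a := M ord0 ord0.
pose mk (x0 : R) (y : 'I_n -> R) : 'I_n.+1 -> R :=
  fun k => if unlift ord0 k is Some j then y j else x0.
have mk0 x0 y : mk x0 y ord0 = x0 by rewrite /mk unlift_none.
have mkt x0 y : tl (mk x0 y) = y by apply: funext => j; rewrite /tl /mk liftK.
pose s (y : 'I_n -> R) := \sum_j bv M j * y j.
have a0 : a < 0.
  have : exists i, mk 1 (fun _ => 0) i != 0 by exists ord0; rewrite mk0 oner_eq0.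
  move/H; rewrite qf_split mk0 mkt qf0 big1 ?mulr0 ?addr0 ?expr1n ?mulr1 //.
  by move=> j _; rewrite mulr0.
have an0 : a != 0 by rewrite lt_eqF.
pose M2 := fun i j => Mp M i j - bv M i * bv M j / a.
have key x : qf M x = a * (x ord0 + s (tl x) / a) ^+ 2 + qf M2 (tl x).
  by rewrite qf_split /M2 qf_schur -/a /s; field.
have M2neg y : (exists i, y i != 0) -> qf M2 y < 0.
  case=> i yi.
  have := key (mk (- s y / a) y); rewrite mk0 mkt.
  have -> : - s y / a + s y / a = 0 by rewrite mulNr addNr.
  rewrite expr0n /= mulr0 add0r => <-.
  by apply: H; exists (lift ord0 i); rewrite -[mk _ _ (lift _ _)]/(tl (mk (- s y / a) y) i) mkt.
have [c' c'0 Hc'] := IH M2 M2neg.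
pose B := \sum_j bv M j ^+ 2.
pose K := 2 ^+ n * B.
have B0 : 0 <= B by rewrite sumr_ge0 // => j _; rewrite sqr_ge0.
have K0 : 0 <= K by rewrite mulr_ge0 ?exprn_ge0.
have sK y : s y ^+ 2 <= K * nrm y.
  apply: le_trans (sq_sum_le _) _; rewrite /K -mulrA ler_wpM2l ?exprn_ge0 //.
  rewrite /nrm mulr_sumr; apply: ler_sum => j _; rewrite exprMn ler_wpM2r ?sqr_ge0 //.
  by rewrite /B (bigD1 j) //= lerDl sumr_ge0 // => k _; rewrite sqr_ge0.
pose D := 1 + 2 * K / a ^+ 2.
have a20 : 0 < a ^+ 2 by rewrite exprn_even_gt0 //= an0.
have D0 : 0 < D.
  have : 0 <= 2 * K / a ^+ 2.
    by rewrite divr_ge0 ?sqr_ge0 // mulr_ge0 // ler0n.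
  by rewrite /D; lra.
pose c := Num.min (- a / 2) (c' / D).
exists c.
  by rewrite /c lt_min divr_gt0 ?oppr_gt0 // divr_gt0.
move=> x.
have nx : nrm x = x ord0 ^+ 2 + nrm (tl x) by rewrite /nrm big_ord_recl.
rewrite nx; apply: (@arith a c c' D _ ((x ord0 + s (tl x) / a) ^+ 2)).
- by rewrite ltW // /c lt_min divr_gt0 ?oppr_gt0 // divr_gt0.
- by rewrite sqr_ge0.
- exact: nrm_ge0.
- have : c <= - a / 2 by rewrite /c ge_min lexx.
  lra.
- have : c <= c' / D by rewrite /c ge_min lexx orbT.
  by rewrite ler_pdivlMr.
- by rewrite key lerD2l -mulNr; apply: Hc'.
- set w := x ord0 + s (tl x) / a.
  have -> : x ord0 = w - s (tl x) / a by rewrite /w addrK.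
  have h1 : (w - s (tl x) / a) ^+ 2 <= 2 * w ^+ 2 + 2 * (s (tl x) / a) ^+ 2.
    have := sqr_ge0 (w + s (tl x) / a); rewrite -subr_ge0 => h; rewrite -subr_ge0.
    by apply: le_trans h _; rewrite le_eqVlt; apply/orP; left; apply/eqP; ring.
  apply: le_trans h1 _; rewrite lerD2l.
  have -> : (D - 1) * nrm (tl x) = 2 * ((K * nrm (tl x)) / a ^+ 2) by rewrite /D; ring.
  rewrite expr_div_n ler_wpM2l // ler_wpM2r ?invr_ge0 ?sqr_ge0 //; exact: sK.
Qed.

End Aux4.
End Aux4.

Module Aux5.
Import Aux Aux2 Aux3 Aux4.
Set Implicit Arguments. Unset Strict Implicit.
Section Aux5.
Variable R : realType.

Lemma quadD n (M1 M2 : 'M[R]_n) x : quad (M1 + M2) x = quad M1 x + quad M2 x.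
Proof. by rewrite /quad mulmxDr mulmxDl mxE. Qed.

Lemma quadZ n a (M : 'M[R]_n) x : quad (a *: M) x = a * quad M x.
Proof. by rewrite /quad -scalemxAr -scalemxAl mxE. Qed.

Lemma quad_qf n (M : 'M[R]_n) x : quad M x = qf (fun i j => M i j) (fun i => x i ord0).
Proof.
rewrite quadE /qf exchange_big /=; apply: eq_bigr => i _.
by rewrite mulr_suml; apply: eq_bigr => j _.
Qed.

Lemma nz_col n (x : 'cV[R]_n) : x != 0 -> exists i, x i ord0 != 0.
Proof.
move=> x0; apply/existsP; apply: contraNT x0; rewrite negb_exists => /forallP Hj.
by apply/eqP/matrixP => i k; rewrite (ord1 k) mxE; apply/eqP; rewrite -[_ == _]negbK Hj.
Qed.

Lemma nrm_gt0 n (y : 'I_n -> R) : (exists i, y i != 0) -> 0 < nrm y.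
Proof.
case=> i yi; rewrite /nrm (bigD1 i) //=.
have h1 : 0 < y i ^+ 2 by rewrite exprn_even_gt0 //= yi.
have h2 : 0 <= \sum_(j < n | j != i) y j ^+ 2 by rewrite sumr_ge0 // => j _; rewrite sqr_ge0.
lra.
Qed.

Lemma qf_bound n (M : 'I_n -> 'I_n -> R) y :
  qf M y <= (\sum_i \sum_j `|M i j|) * nrm y.
Proof.
rewrite /qf mulr_suml; apply: ler_sum => i _; rewrite mulr_suml; apply: ler_sum => j _.
have N0 := nrm_ge0 y.
have hi : y i ^+ 2 <= nrm y by rewrite /nrm (bigD1 i) //= lerDl sumr_ge0 // => k _; rewrite sqr_ge0.
have hj : y j ^+ 2 <= nrm y by rewrite /nrm (bigD1 j) //= lerDl sumr_ge0 // => k _; rewrite sqr_ge0.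
have hp : `|y i| * `|y j| <= nrm y.
  have := sqr_ge0 (`|y i| - `|y j|).
  rewrite -(real_normK (num_real (y i))) in hi.
  rewrite -(real_normK (num_real (y j))) in hj.
  move: hi hj; set u := `|y i|; set v := `|y j|; nra.
apply: le_trans (ler_norm _) _.
rewrite mulrAC normrM normrM mulrC ler_wpM2l //.
Qed.

Lemma arith2 (tb t c KA N qA q2 q4 : R) : 0 < tb -> tb <= t -> tb * KA < t * c ->
  0 < N -> qA <= KA * N -> tb * q2 + tb ^+ 2 * q4 <= - c * N -> q4 <= 0 ->
  qA + t * q2 + t ^+ 2 * q4 < 0.
Proof.
move=> tb0 tbt H3 N0 H5 H6 q40.
have t0 : 0 <= t by apply: le_trans tbt; exact: ltW.
have h1 := ler_wpM2l t0 H6.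
have h2 : (t * tb * (t - tb)) * q4 <= 0.
  by rewrite mulr_ge0_le0 // !mulr_ge0 ?subr_ge0 // ltW.
have h3 := ler_wpM2l (ltW tb0) H5.
have h4 : tb * KA * N < t * c * N by rewrite ltr_pM2r.
have : tb * (qA + t * q2 + t ^+ 2 * q4) < 0 by nra.
by rewrite pmulr_rlt0.
Qed.

Lemma large_negdef n (A J2 J4 : 'M[R]_n) (k0 : R) : (0 < n)%N ->
  neg_semidef J4 -> (exists kb, neg_def (kb ^+ 2 *: J2 + kb ^+ 4 *: J4)) ->
  exists2 k, k0 < k & forall x, x != 0 -> quad (A + k ^+ 2 *: J2 + k ^+ 4 *: J4) x < 0.
Proof.
move=> n0 H4 [kb Hkb].
set Nb := kb ^+ 2 *: J2 + kb ^+ 4 *: J4 in Hkb.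
pose tb := kb ^+ 2.
have kb0 : kb != 0.
  apply/eqP => kb0; pose x1 : 'cV[R]_n := const_mx 1.
  have x10 : x1 != 0.
    apply/eqP => /matrixP /(_ (Ordinal n0) ord0); rewrite !mxE => /eqP; by rewrite oner_eq0.
  have := Hkb x1 x10; rewrite /Nb kb0 !expr0n /= !scale0r addr0 /quad mulmx0 mul0mx mxE.
  by rewrite ltxx.
have tb0 : 0 < tb by rewrite /tb exprn_even_gt0 //= kb0.
have [c c0 Hc] : exists2 c, 0 < c & forall y, qf (fun i j => Nb i j) y <= - c * nrm y.
  apply: unif => y [i yi].
  have -> : y = (fun i => (\col_k y k : 'cV[R]_n) i ord0) by apply: funext => k; rewrite mxE.
  rewrite -quad_qf; apply: Hkb; apply/eqP => /matrixP /(_ i ord0); rewrite !mxE.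
  by move/eqP; rewrite (negbTE yi).
pose KA := \sum_i \sum_j `|A i j|.
have KA0 : 0 <= KA by rewrite sumr_ge0 // => i _; rewrite sumr_ge0.
have hq : 0 <= tb * KA / c.
  by apply: divr_ge0; [apply: mulr_ge0 => //; exact: ltW | exact: ltW].
pose k := 1 + `|k0| + tb + tb * KA / c.
have k1 : 1 <= k.
  have := normr_ge0 k0; rewrite /k; lra.
exists k.
  have := ler_norm k0; rewrite /k; lra.
move=> x x0.
pose t := k ^+ 2.
have kt : k <= t by rewrite /t expr2 ler_peMl // (le_trans ler01).
have tbt : tb <= t.
  have := normr_ge0 k0; rewrite /k in kt *; lra.
have tc : tb * KA < t * c.
  rewrite -ltr_pdivrMr //.
  have := normr_ge0 k0; have := ltW tb0; rewrite /k in kt *; lra.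
have N0 : 0 < nrm (fun i => x i ord0) by apply: nrm_gt0; exact: nz_col.
rewrite !quadD !quadZ.
have -> : k ^+ 4 = t ^+ 2 by rewrite /t -exprM.
apply: (arith2 tb0 tbt tc N0).
- by rewrite quad_qf qf_bound.
- have := Hc (fun i => x i ord0); rewrite -quad_qf /Nb quadD !quadZ.
  by rewrite /tb -exprM.
- exact: H4.
Qed.

End Aux5.
End Aux5.

Module Aux6.
Set Implicit Arguments. Unset Strict Implicit.
Section Aux6.
Variable R : realType.
Local Notation C := (complex R).
Local Notation nc := (@Normc.normc R).

Lemma nc_ge0 (x : C) : 0 <= nc x.
Proof. by case: x => a b; rewrite /Normc.normc sqrtr_ge0. Qed.

Lemma ncM (x y : C) : nc (x * y) = nc x * nc y.
Proof. exact: Normc.normcM. Qed.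

Lemma ncD (x y : C) : nc (x + y) <= nc x + nc y.
Proof. exact: (@le_normcD R x y). Qed.

Lemma ncN (x : C) : nc (- x) = nc x.
Proof. exact: (@normcN R x). Qed.

Lemma nc0 : nc 0 = 0.
Proof. exact: Normc.normc0. Qed.

Lemma nc1 : nc 1 = 1.
Proof. exact: Normc.normc1. Qed.

Lemma ncB (x y : C) : nc (x - y) <= nc x + nc y.
Proof. by rewrite -(ncN y) ncD. Qed.

Lemma ncB2 (x y : C) : nc x - nc y <= nc (x - y).
Proof. have := ncD (x - y) y; rewrite subrK; lra. Qed.

Lemma nc_real (x : R) : nc (x%:C)%C = `|x|.
Proof. by rewrite /Normc.normc /= expr0n /= addr0 sqrtr_sqr. Qed.

Lemma Re_le_nc (z : C) : complex.Re z <= nc z.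
Proof.
case: z => a b; rewrite /Normc.normc /=.
apply: le_trans (ler_norm a) _; rewrite -sqrtr_sqr; apply: ler_wsqrtr.
by rewrite lerDl sqr_ge0.
Qed.

Lemma ncX (x : C) k : nc (x ^+ k) = nc x ^+ k.
Proof. by elim: k => [|k IH]; rewrite ?expr0 ?nc1 // !exprS ncM IH. Qed.

Lemma nc_sum m (F : 'I_m -> C) : nc (\sum_(i < m) F i) <= \sum_(i < m) nc (F i).
Proof.
elim: m F => [|m IH] F; first by rewrite !big_ord0 nc0.
rewrite !big_ord_recr /=; apply: le_trans (ncD _ _) _; rewrite lerD2r; exact: IH.
Qed.

Lemma nc_prod (r : seq C) (F : C -> C) : nc (\prod_(z <- r) F z) = \prod_(z <- r) nc (F z).
Proof.
elim: r => [|a r IH]; first by rewrite !big_nil nc1.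
by rewrite !big_cons ncM IH.
Qed.

End Aux6.
End Aux6.

Module Aux7.
Import Aux6.
Set Implicit Arguments. Unset Strict Implicit.
Section Aux7.
Variable R : realType.
Local Notation C := (complex R).
Local Notation nc := (@Normc.normc R).

Lemma cauchy_nc n (P : {poly C}) mu : size P = n.+1 -> P`_n = 1 -> root P mu ->
  nc mu <= 1 + \sum_(i < n) nc P`_i.
Proof.
move=> sP Pn rmu.
have E0 : P.[mu] = \sum_(i < n) P`_i * mu ^+ i + mu ^+ n.
  by rewrite horner_coef sP big_ord_recr /= Pn mul1r.
case: n sP Pn E0 => [|m] sP Pn E0.
  by move: rmu; rewrite /root E0 big_ord0 add0r expr0 oner_eq0.
rewrite leNgt; apply/negP => hr.
set S := \sum_(i < m.+1) nc P`_i in hr.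
have S0 : 0 <= S by rewrite sumr_ge0 // => i _; exact: nc_ge0.
have r1 : 1 <= nc mu by apply: ltW; apply: le_lt_trans hr; rewrite lerDl.
move/rootP: rmu; rewrite E0 => /eqP.
rewrite addrC addr_eq0 => /eqP E.
have h : nc (mu ^+ m.+1) <= \sum_(i < m.+1) nc P`_i * nc mu ^+ i.
  rewrite E ncN; apply: le_trans (nc_sum _) _.
  by apply: ler_sum => i _; rewrite ncM ncX.
rewrite ncX in h.
have h2 : \sum_(i < m.+1) nc P`_i * nc mu ^+ i <= S * nc mu ^+ m.
  rewrite /S mulr_suml; apply: ler_sum => i _; apply: ler_wpM2l; first exact: nc_ge0.
  by apply: ler_weXn2l => //; rewrite -ltnS.
have := le_trans h h2; rewrite exprS ler_pM2r ?exprn_gt0 //; last by apply: lt_le_trans r1.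
lra.
Qed.

Lemma coefXsubCM (a : C) (T : {poly C}) i :
  (('X - a%:P) * T)`_i = (if i == 0%N then 0 else T`_i.-1) - a * T`_i.
Proof. by rewrite mulrBl coefB coefXM coefCM. Qed.

Lemma prod_coef_bound (M : R) (r : seq C) : 0 <= M -> (forall z, z \in r -> nc z <= M) ->
  forall i, nc (\prod_(z <- r) ('X - z%:P))`_i <= (1 + M) ^+ size r.
Proof.
move=> M0; elim: r => [|a r IH] H i.
  rewrite big_nil expr0 coef1; case: (i == 0%N); rewrite ?nc1 ?nc0 //.
have Hr : forall z, z \in r -> nc z <= M by move=> z zr; apply: H; rewrite inE zr orbT.
have Ha : nc a <= M by apply: H; rewrite inE eqxx.
rewrite big_cons coefXsubCM /=.
apply: le_trans (ncB _ _) _.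
have h1 : nc (if i == 0%N then 0 else (\prod_(j <- r) ('X - j%:P))`_i.-1) <= (1 + M) ^+ size r.
  by case: (i == 0%N); [rewrite nc0 exprn_ge0 // addr_ge0 | exact: IH].
have h2 : nc (a * (\prod_(j <- r) ('X - j%:P))`_i) <= M * (1 + M) ^+ size r.
  by rewrite ncM; apply: ler_pM => //; [exact: nc_ge0 | exact: nc_ge0 | exact: IH].
rewrite exprS; lra.
Qed.

Lemma coef1_two (a b : C) (T : {poly C}) :
  (('X - a%:P) * (('X - b%:P) * T))`_1 = - (a + b) * T`_0 + a * b * T`_1.
Proof. rewrite !coefXsubCM /=; ring. Qed.

Lemma Q_lower (d : R) (s : seq C) z : 0 < d -> (forall l, l \in s -> complex.Re l <= - d) ->
  0 <= complex.Re z -> d ^+ size s <= nc (\prod_(l <- s) ('X - l%:P)).[z].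
Proof.
move=> d0 H z0; rewrite horner_prod nc_prod.
elim: s H => [|a s IH] H; first by rewrite big_nil expr0.
rewrite big_cons exprS; apply: ler_pM.
- exact: ltW.
- by apply: exprn_ge0; exact: ltW.
- rewrite hornerXsubC; apply: le_trans (Re_le_nc _).
  have := H a (mem_head _ _); clear IH H; case: z z0 => za zb; case: a => aa ab /= z0 h; lra.
- by apply: IH => l ls; apply: H; rewrite inE ls orbT.
Qed.

End Aux7.
End Aux7.

Module Aux8.
Import Aux Aux2 Aux6 Aux7.
Set Implicit Arguments. Unset Strict Implicit.
Section Aux8.
Variable R : realType.
Local Notation C := (complex R).
Local Notation nc := (@Normc.normc R).
Local Notation RC := (real_complex R).

Lemma prod_rem (r : seq C) mu : mu \in r ->
  \prod_(z <- r) ('X - z%:P) = ('X - mu%:P) * \prod_(z <- rem mu r) ('X - z%:P).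
Proof. by move=> mur; rewrite (perm_big _ (perm_to_rem mur)) big_cons. Qed.

Lemma conj_map (p : {poly R}) : map_poly conjc (map_poly RC p) = map_poly RC p.
Proof. by apply/polyP => i; rewrite !coef_map /= oppr0. Qed.

Lemma second_root (p : {poly R}) (r : seq C) mu :
  p \is monic -> 0 < p.[0] -> map_poly RC p = \prod_(z <- r) ('X - z%:P) ->
  root (map_poly RC p) mu -> 0 <= complex.Re mu ->
  exists2 mu2, mu2 \in rem mu r & 0 <= complex.Re mu2.
Proof.
move=> mp p0 Hr rmu Rmu.
have mur : mu \in r by rewrite -root_prod_XsubC -Hr.
have [Im0|Imn0] := eqVneq (complex.Im mu) 0.
  set t := complex.Re mu.
  have mut : mu = (t%:C)%C by move: Im0; rewrite /t; case: (mu) => a b /= ->.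
  have rt : root p t.
    have : root (map_poly RC p) (t%:C)%C by rewrite -mut.
    by rewrite fmorph_root.
  have t0 : 0 < t.
    rewrite lt_def Rmu andbT; apply/eqP => t0; move: rt; rewrite t0 /root.
    by rewrite gt_eqF.
  set s := p %/ ('X - t%:P).
  have ps : p = s * ('X - t%:P) by rewrite /s divpK // -root_factor_theorem.
  have ms : s \is monic.
    by apply/monicP; have := monicP mp; rewrite ps lead_coefM lead_coefXsubC mulr1.
  have s0 : s.[0] < 0.
    move: p0; rewrite ps hornerM hornerXsubC sub0r mulrN oppr_gt0 pmulr_llt0 //.
  have [t2 t20 rt2] := monic_pos_root ms s0.
  have E : \prod_(z <- rem mu r) ('X - z%:P) = map_poly RC s.
    apply: (@mulfI _ ('X - mu%:P)); first by apply: monic_neq0; exact: monicXsubC.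
    rewrite -prod_rem // -Hr ps rmorphM /= map_polyXsubC mulrC mut //.
  exists (t2%:C)%C; last by apply: ltW.
  by rewrite -root_prod_XsubC E fmorph_root.
exists (conjc mu).
  apply: rem_mem.
    apply/eqP => E; move/eqP: Imn0; apply; have := congr1 (@complex.Im R) E.
    by case: (mu) => a b /=; lra.
  rewrite -root_prod_XsubC -Hr -complex_root_conj conj_map //.
by case: (mu) Rmu.
Qed.

End Aux8.
End Aux8.

Module Aux9.
Set Implicit Arguments. Unset Strict Implicit.
Section Aux9.
Variable R : realType.

Lemma lip_fin (F : nat -> {poly R}) m : exists2 K, 0 <= K &
  forall i, (i < m)%N -> forall x, 0 <= x <= 1 -> `|(F i).[x] - (F i).[0]| <= x * K.
Proof.
elim: m => [|m [K K0 HK]]; first by exists 0.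
have [k k1 Hk] := poly_lipshitz (F m) 0 1.
exists (K + k); first by rewrite addr_ge0 // (le_trans ler01).
move=> i; rewrite ltnS leq_eqVlt => /orP[/eqP ->|im] x /andP[x0 x1].
  have := Hk 0 x; rewrite !in_itv /= lexx ler01 x0 x1 subr0 (ger0_norm x0) => /(_ isT isT) h.
  apply: le_trans h _; rewrite mulrC; apply: ler_wpM2l => //; lra.
apply: le_trans (HK i im x _) _; first by rewrite x0 x1.
apply: ler_wpM2l => //; lra.
Qed.

Definition Jpoly n (A J2 J4 : 'M[R]_n) : 'M[{poly R}]_n :=
  \matrix_(i, j) ((A i j)%:P + 'X^2 * (J2 i j)%:P + 'X^4 * (J4 i j)%:P).

Lemma Jpoly_eval n (A J2 J4 : 'M[R]_n) k :
  map_mx (horner_eval k) (Jpoly A J2 J4) = A + k ^+ 2 *: J2 + k ^+ 4 *: J4.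
Proof.
by apply/matrixP => i j; rewrite !mxE /= horner_evalE !hornerE.
Qed.

Lemma coef_lip n (A J2 J4 : 'M[R]_n) : exists2 K, 0 <= K &
  forall k, 0 <= k <= 1 -> forall i,
   `|(char_poly (A + k ^+ 2 *: J2 + k ^+ 4 *: J4))`_i - (char_poly A)`_i| <= k * K.
Proof.
set CP := char_poly (Jpoly A J2 J4).
have E k : char_poly (A + k ^+ 2 *: J2 + k ^+ 4 *: J4) = map_poly (horner_eval k) CP.
  by rewrite map_char_poly Jpoly_eval.
have E0 : A = A + 0 ^+ 2 *: J2 + 0 ^+ 4 *: J4 by rewrite !expr0n /= !scale0r !addr0.
have [K K0 HK] := lip_fin (fun i => CP`_i) (size CP).
exists K => // k hk i; rewrite {2}E0 !E !coef_map /=.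
have [iS|iS] := ltnP i (size CP); first exact: HK.
rewrite !horner_evalE nth_default // -[0.[k]]/(0 : {poly R}).[k] -[0.[0]]/(0 : {poly R}).[0] !horner0 subr0 normr0 mulr_ge0 //; by case/andP: hk.
Qed.

End Aux9.
End Aux9.

Module Aux10.
Import Aux Aux2 Aux6 Aux7 Aux8 Aux9.
Set Implicit Arguments. Unset Strict Implicit.
Section Aux10.
Variable R : realType.
Local Notation C := (complex R).
Local Notation nc := (@Normc.normc R).
Local Notation RC := (real_complex R).
Local Notation PC X := (map_poly RC (char_poly X)).

Lemma arith3 (g k K r1 Wt c rho1 rho2 : R) : 0 < g -> 0 < k -> k <= 1 -> 0 <= K ->
  0 <= r1 -> 0 <= Wt -> 0 <= rho1 -> 0 <= rho2 -> rho1 <= k * r1 -> rho2 <= k * r1 ->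
  g - k * K <= c -> c <= (rho1 + rho2) * Wt + rho1 * rho2 * Wt ->
  k * (K + r1 * (2 + r1) * Wt + 1) < g -> False.
Proof.
move=> g0 k0 k1 K0 r10 W0 p1 p2 h1 h2 H1 H2 H3.
have e1 : (rho1 + rho2) * Wt <= (2 * (k * r1)) * Wt.
  by apply: ler_wpM2r => //; lra.
have e2 : rho1 * rho2 <= (k * r1) * (k * r1) by apply: ler_pM.
have e3 : (k * r1) * (k * r1) <= k * (r1 * r1).
  rewrite mulrACA; apply: ler_wpM2r; first by rewrite mulr_ge0.
  by rewrite ger_pMr.
have e4 : rho1 * rho2 * Wt <= k * (r1 * r1) * Wt.
  by apply: ler_wpM2r => //; apply: le_trans e2 e3.
nra.
Qed.

Lemma factor0 n (A : 'M[R]_n) (s : seq C) : (0 < n)%N -> \det A = 0 ->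
  eigen_mset A s -> count (fun z : C => complex.Re z < 0) s = n.-1 ->
  exists s' : seq C, [/\ size s' = n.-1, PC A = 'X * \prod_(z <- s') ('X - z%:P)
     & forall l, l \in s' -> complex.Re l < 0].
Proof.
move=> n0 dA Hs cs; rewrite /eigen_mset in Hs.
change (PC A = \prod_(z <- s) ('X - z%:P)) in Hs.
have ss : size s = n.
  have := size_prod_XsubC s id; rewrite -Hs size_map_poly size_char_poly; by case.
have s0 : 0 \in s.
  rewrite -root_prod_XsubC -Hs /root horner_map char0 -scaleN1r detZ dA mulr0.
  by rewrite rmorph0.
exists (rem 0 s); split.
- by rewrite size_rem // ss.
- by rewrite Hs (prod_rem s0) polyC0 subr0.
- have := (permP (perm_to_rem s0)) (fun z : C => complex.Re z < 0).
  rewrite cs /= ltxx add0n => c2.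
  have : all (fun z : C => complex.Re z < 0) (rem 0 s).
    by rewrite all_count -c2 size_rem // ss.
  by move/allP.
Qed.

Lemma nc_coef_map (p : {poly R}) i : nc ((map_poly RC p)`_i) = `|p`_i|.
Proof. rewrite coef_map; exact: nc_real. Qed.

Lemma map_sub (p q : {poly R}) : map_poly RC p - map_poly RC q = map_poly RC (p - q).
Proof. by rewrite rmorphB. Qed.

Lemma nc_coefB (p q : {poly R}) i :
  nc ((map_poly RC p - map_poly RC q)`_i) = `|p`_i - q`_i|.
Proof. by rewrite map_sub nc_coef_map coefB. Qed.

Lemma small_k n (A J2 J4 : 'M[R]_n) (kh : R) : (0 < n)%N -> 0 < kh ->
  (forall k, 0 < k < kh -> 0 < \det (- (A + k ^+ 2 *: J2 + k ^+ 4 *: J4))) ->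
  \det A = 0 ->
  (exists s, eigen_mset A s /\ count (fun z : C => complex.Re z < 0) s = n.-1) ->
  exists2 kk, 0 < kk & forall k, 0 < k < kk ->
    forall z, root (PC (A + k ^+ 2 *: J2 + k ^+ 4 *: J4)) z -> complex.Re z < 0.
Proof.
move=> n0 kh0 Hdet dA [s [Hs cs]].
have [s' [ss' HA Hs']] := factor0 n0 dA Hs cs.
set Q := \prod_(z <- s') ('X - z%:P) in HA.
have [b b0 Hb] := seq_Re_neg Hs'.
set d := - b.
have d0 : 0 < d by rewrite oppr_gt0.
set g := d ^+ n.-1.
have g0 : 0 < g by rewrite exprn_gt0.
have Qlow z : 0 <= complex.Re z -> g <= nc Q.[z].
  move=> z0; rewrite /g -ss'; apply: Q_lower => // l ls; rewrite /d opprK; exact: Hb.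
have [K K0 HK] := coef_lip A J2 J4.
set p0 := char_poly A.
set Jk := fun k => A + k ^+ 2 *: J2 + k ^+ 4 *: J4.
set M := 1 + \sum_(i < n) (`|p0`_i| + K).
have M1 : 1 <= M by rewrite lerDl sumr_ge0 // => i _; rewrite addr_ge0.
have coefb k i : 0 <= k <= 1 -> `|(char_poly (Jk k))`_i| <= `|p0`_i| + k * K.
  move=> hk; have := HK k hk i; rewrite -/p0 -/(Jk k) => h.
  have := ler_normD p0`_i ((char_poly (Jk k))`_i - p0`_i); rewrite addrC subrK => h2.
  by apply: le_trans h2 _; rewrite lerD2l.
have HM k z : 0 <= k <= 1 -> root (PC (Jk k)) z -> nc z <= M.
  move=> hk rz.
  apply: le_trans (cauchy_nc (n := n) _ _ rz) _.
  - by rewrite size_map_poly size_char_poly.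
  - rewrite coef_map /=; have := monicP (char_poly_monic (Jk k)).
    by rewrite lead_coefE size_char_poly /= => ->; rewrite rmorph1.
  rewrite lerD2l; apply: ler_sum => i _; rewrite nc_coef_map.
  apply: le_trans (coefb k i hk) _; rewrite lerD2l.
  by case/andP: hk => hk0 hk1; rewrite -[X in _ <= X]mul1r; apply: ler_wpM2r.
set K1 := n.+1%:R * K * M ^+ n.
have Hdiff q w : 0 <= q <= 1 -> nc w <= M ->
    nc ((PC (Jk q)).[w] - (PC A).[w]) <= q * K1.
  move=> hk zM; rewrite -hornerN -hornerD.
  rewrite (@horner_coef_wide _ n.+1); last first.
    by apply: leq_trans (size_polyD _ _) _; rewrite size_polyN !size_map_poly !size_char_poly maxnn.
  apply: le_trans (nc_sum _) _.
  have -> : q * K1 = \sum_(i < n.+1) (q * K * M ^+ n).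
    by rewrite sumr_const card_ord /K1 -mulr_natl; ring.
  apply: ler_sum => i _.
  rewrite ncM nc_coefB ncX.
  apply: ler_pM.
  - exact: normr_ge0.
  - by apply: exprn_ge0; exact: nc_ge0.
  - by rewrite -/(Jk q) -/p0; apply: HK.
  apply: le_trans (_ : M ^+ i <= M ^+ n).
    by apply: lerXn2r => //; [exact: nc_ge0 | apply: le_trans M1].
  by apply: ler_weXn2l => //; rewrite -ltnS.
have K10 : 0 <= K1 by rewrite /K1 !mulr_ge0 // exprn_ge0 // (le_trans ler01).
have Hsmall q z : 0 <= q <= 1 -> root (PC (Jk q)) z -> 0 <= complex.Re z ->
    nc z <= q * (K1 / g).
  move=> hq rz Rz.
  have zM := HM q z hq rz.
  have h1 : nc z * g <= nc ((PC A).[z]).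
    rewrite HA hornerM hornerX ncM; apply: ler_wpM2l; first exact: nc_ge0.
    exact: Qlow.
  have h2 : nc ((PC A).[z]) <= q * K1.
    have := Hdiff q z hq zM; rewrite (rootP rz) sub0r ncN; exact.
  by rewrite mulrA ler_pdivlMr //; apply: le_trans h1 h2.
set r1 := K1 / g.
have r10 : 0 <= r1 by rewrite divr_ge0 // ltW.
set Wt := (1 + M) ^+ n.
have Wt0 : 0 <= Wt by rewrite exprn_ge0 // addr_ge0 // (le_trans ler01).
set L := K + r1 * (2 + r1) * Wt + 1.
have L0 : 0 < L.
  have : 0 <= r1 * (2 + r1) * Wt.
    by apply: mulr_ge0 => //; apply: mulr_ge0 => //; lra.
  rewrite /L; lra.
exists (Num.min (Num.min 1 kh) (g / L)).
  by rewrite !lt_min ltr01 kh0 divr_gt0.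
move=> k /andP[k0]; rewrite !lt_min => /andP[/andP[k1 kkh] kgL] z rz.
rewrite ltNge; apply/negP => Rz.
have hk : 0 <= k <= 1 by rewrite ltW // ltW.
have p0pos : 0 < (char_poly (Jk k)).[0] by rewrite char0; apply: Hdet; rewrite k0 kkh.
have [r [sr Hr]] := charC_fact (Jk k).
have [mu2 mu2r Rmu2] := second_root (char_poly_monic (Jk k)) p0pos Hr rz Rz.
have zr : z \in r by rewrite -root_prod_XsubC -Hr.
have mu2r' : mu2 \in r by apply: mem_rem mu2r.
have rmu2 : root (PC (Jk k)) mu2 by rewrite Hr root_prod_XsubC.
have nz := Hsmall k z hk rz Rz.
have nmu2 := Hsmall k mu2 hk rmu2 Rmu2.
set T := \prod_(w <- rem mu2 (rem z r)) ('X - w%:P).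
have Pk : PC (Jk k) = ('X - z%:P) * (('X - mu2%:P) * T).
  by rewrite Hr (prod_rem zr) (prod_rem mu2r).
have M0 : 0 <= M by apply: le_trans M1.
have Tb i : nc T`_i <= Wt.
  apply: le_trans (prod_coef_bound M0 _ i) _.
    move=> w wr; apply: (HM k) => //; rewrite Hr root_prod_XsubC.
    by apply: mem_rem (mem_rem wr).
  apply: ler_weXn2l; first by rewrite lerDl.
  by rewrite size_rem // size_rem // sr (leq_trans (leq_pred _)) // leq_pred.
have c1 : nc ((PC (Jk k))`_1) <= (nc z + nc mu2) * Wt + nc z * nc mu2 * Wt.
  rewrite Pk coef1_two; apply: le_trans (ncD _ _) _; apply: lerD.
    rewrite ncM ncN; apply: ler_pM; [exact: nc_ge0 | exact: nc_ge0 | exact: ncD | exact: Tb].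
  rewrite !ncM; apply: ler_pM; [| exact: nc_ge0 | by [] | exact: Tb].
  by rewrite mulr_ge0 // nc_ge0.
have c2 : g - k * K <= nc ((PC (Jk k))`_1).
  rewrite nc_coef_map.
  have h1 : g <= `|p0`_1|.
    have := Qlow 0 (lexx 0); rewrite horner_coef0 -nc_coef_map -/p0 HA coefXM /=.
    done.
  have h2 := HK k hk 1%N; rewrite -/p0 -/(Jk k) in h2.
  have h3 := ler_normD (char_poly (Jk k))`_1 (p0`_1 - (char_poly (Jk k))`_1).
  rewrite addrC subrK distrC in h3.
  lra.
apply: (arith3 g0 k0 (ltW k1) K0 r10 Wt0 (nc_ge0 z) (nc_ge0 mu2) nz nmu2 c2 c1).
by rewrite -ltr_pdivlMr.
Qed.

End Aux10.
End Aux10.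


Theorem theorem3 (R : realType) (n m : nat) (hn : (0 < n)%N) (hm : (0 < m)%N)
  (B : 'M[int]_(n, m)) (C : 'M[int]_(m, n)) (dl du : 'rV[R]_m)
  (J2 J4 : 'M[R]_n)
  (hdl : forall j, 0 <= dl ord0 j) (hdu : forall j, dl ord0 j <= du ord0 j)
  (hJ2 : symmetric_mx J2) (hJ4 : symmetric_mx J4)
  (* (A1) *)
  (A1_sing : forall d, in_box dl du d ->
     \det (intmx R B *m diag_mx d *m intmx R C) = 0)
  (A1_stab : forall d, in_box dl du d ->
     exists s, eigen_mset (intmx R B *m diag_mx d *m intmx R C) s /\
       count (fun z : complex R => complex.Re z < 0) s = n.-1)
  (A1_v : exists v : 'cV[R]_n, v != 0 /\ (forall i, 0 <= v i ord0) /\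
       v^T *m intmx R B = 0)
  (* (A2) *)
  (A2_J2 : indefinite J2) (A2_J4 : neg_semidef J4)
  (A2_kb : exists kb : R, neg_def (kb ^+ 2 *: J2 + kb ^+ 4 *: J4))
  (* hypotheses of the theorem *)
  (hPm : initially_positive (Psi_minus B C J2 J4 dl du))
  (hPp : negative_sign_change (Psi_plus B C J2 J4 dl du)) :
  forall d, in_box dl du d ->
    microphase_separation (fun k => spectral_abscissa (Jmat B C J2 J4 d k)).
Proof.
move=> d hd.
set A := intmx R B *m diag_mx d *m intmx R C.
have JE k : Jmat B C J2 J4 d k = A + k ^+ 2 *: J2 + k ^+ 4 *: J4 by [].
have detm k : 0 < Psi_minus B C J2 J4 dl du k -> 0 < \det (- Jmat B C J2 J4 d k).
  move=> hP.
  have hi : has_inf [set \det (- Jmat B C J2 J4 d' k) | d' in [set d' | in_box dl du d']].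
    apply: contrapT => hn'; move: hP; rewrite /Psi_minus inf_out //; by rewrite ltxx.
  apply: (lt_le_trans hP); have := ge_inf hi.2; apply; by exists d.
have detp k : Psi_plus B C J2 J4 dl du k < 0 -> \det (- Jmat B C J2 J4 d k) < 0.
  move=> hP.
  have hs : has_sup [set \det (- Jmat B C J2 J4 d' k) | d' in [set d' | in_box dl du d']].
    apply: contrapT => hn'; move: hP; rewrite /Psi_plus sup_out //; by rewrite ltxx.
  apply: le_lt_trans hP; have := sup_upper_bound hs; apply; by exists d.
have [kh [kh0 Hkh]] := hPm.
have [kk kk0 Hkk] := @Aux10.small_k R n A J2 J4 kh hn kh0
   (fun k hk => detm k (Hkh k hk)) (A1_sing d hd) (A1_stab d hd).
have [k1 [k2 [k10 [k12 [Pk1 Pk2]]]]] := hPp.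
have k20 : 0 < k2 by apply: le_lt_trans k12.
have rho2 : 0 < spectral_abscissa (Jmat B C J2 J4 d k2).
  by apply: Aux2.rho_gt0_det; apply: detp.
have [k3 k23 Hk3] := @Aux5.large_negdef R n A J2 J4 k2 hn A2_J4 A2_kb.
have rho3 : spectral_abscissa (Jmat B C J2 J4 d k3) < 0.
  apply: Aux.rho_lt0 => // z rz; apply: (Aux3.eig_negdef (Hk3)); exact: rz.
exists (Num.min kk (k2 / 2)); split.
  by rewrite lt_min kk0 divr_gt0.
split.
  move=> k /andP[k0]; rewrite lt_min => /andP[kkk _].
  by apply: Aux.rho_lt0 => // z rz; apply: (Hkk k); rewrite ?k0.
exists k2, k3; split.
  rewrite gt_min; apply/orP; right; rewrite ltr_pdivrMr //; lra.
by [].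
Qed.
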